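(* Let $q$ be a prime power and $L\in\mathbb{F}_q[x]$ a $q$-polynomial of $q$-degree $n$ such that $L(x)/x$ is irreducible in $\mathbb{F}_q[x]$. Let $E$ be a splitting field of $L$ over $\mathbb{F}_q$ and $V\subseteq E$ the $\mathbb{F}_q$-space of roots of $L$. For any ordered $\mathbb{F}_q$-basis $v_1,\dots,v_n$ of $V$ and $r\geq 1$, let $\epsilon_r:H_{n,r}(\mathbb{F}_q)\to E$, $\epsilon_r(P)=P(v_1,\dots,v_n)$. Then $\epsilon_r$ is injective for $1\leq r\leq q-1$.
   Context: $H_{n,r}(\mathbb{F}_q)$ is the space of homogeneous polynomials of degree $r$ in $\mathbb{F}_q[x_1,\dots,x_n]$ together with $0$. A $q$-polynomial of $q$-degree $n$ is $\sum_{i=0}^n a_ix^{q^i}$ with $a_n\neq0$. *)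

(* Defs.v *)
From HB Require Import structures.
From mathcomp Require Import all_boot all_order all_algebra all_field.
From mathcomp Require Import mpoly.
Set Implicit Arguments. Unset Strict Implicit. Unset Printing Implicit Defensive.
Import GRing.Theory.
Local Open Scope ring_scope.

Definition homog_deg (F : ringType) (n r : nat) (P : {mpoly F[n]}) : bool :=
  all (fun m : 'X_{1..n} => mdeg m == r) (msupp P).

Definition is_qpoly (F : ringType) (q n : nat) (L : {poly F}) : Prop :=
  exists a : 'I_n.+1 -> F,
    a ord_max != 0 /\ L = \sum_(i < n.+1) a i *: 'X^(q ^ i).

Definition eval_at (F : fieldType) (E : fieldExtType F) (n : nat)
  (v : n.-tuple E) (P : {mpoly F[n]}) : E :=
  mmap (in_alg E) (tnth v) P.

(* Main.v *)
Require Import Defs.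
From HB Require Import structures.
From mathcomp Require Import all_boot all_order all_algebra all_field.
From mathcomp Require Import mpoly.
From mathcomp Require Import zify.
Import GRing.Theory.
Local Open Scope ring_scope.
Lemma mmap_comp (n k : nat) (R S : comRingType) (f : {rmorphism R -> S})
  (h : 'I_k -> S) (lq : n.-tuple {mpoly R[k]}) (p : {mpoly R[n]}) :
  mmap f h (p \mPo lq) = mmap f (fun i => mmap f h (tnth lq i)) p.
Proof.
rewrite comp_mpolyEX [in RHS](mpolyE p) !raddf_sum /=.
apply: eq_bigr => m _; rewrite !mmapZ comp_mpolyX mmapX rmorph_prod /=.
congr (_ * _); apply: eq_bigr => i _; by rewrite rmorphXn.
Qed.

Lemma mmap_ext (n : nat) (R S : ringType) (f : {additive R -> S})
  (h1 h2 : 'I_n -> S) (p : {mpoly R[n]}) :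
  h1 =1 h2 -> mmap f h1 p = mmap f h2 p.
Proof.
move=> e; rewrite /mmap; apply: eq_bigr => m _; congr (_ * _).
by apply: mmap1_eq.
Qed.

Lemma baseq_inj (q n : nat) (f g : nat -> nat) :
  (forall i, (i < n)%N -> (f i < q)%N) -> (forall i, (i < n)%N -> (g i < q)%N) ->
  (\sum_(i < n) f i * q ^ i = \sum_(i < n) g i * q ^ i)%N ->
  forall i, (i < n)%N -> f i = g i.
Proof.
elim: n f g => [//|n IH] f g hf hg; rewrite !big_ord_recl /= !expn0 !muln1.
have h0f := hf 0%N isT; have h0g := hg 0%N isT.
have qp : (0 < q)%N by apply: leq_ltn_trans h0f.
have eS : forall h : nat -> nat, (\sum_(i < n) h (bump 0 i) * q ^ (bump 0 i) =
    q * \sum_(i < n) h i.+1 * q ^ i)%N.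
  move=> h; rewrite big_distrr /=; apply: eq_bigr => i _.
  by rewrite /bump leq0n add1n expnS mulnCA.
rewrite !eS => e.
have e0 : f 0%N = g 0%N.
  have := congr1 (modn^~ q) e; rewrite /= ![(_ + q * _)%N]addnC !(mulnC q) !modnMDl !modn_small //.
have e1 : (\sum_(i < n) f i.+1 * q ^ i = \sum_(i < n) g i.+1 * q ^ i)%N.
  apply/eqP; rewrite -(eqn_pmul2l qp); apply/eqP; lia.
move=> [|i] hi //.
apply: (IH (fun i => f i.+1) (fun i => g i.+1)) => //.
- by move=> j hj; apply: hf.
- by move=> j hj; apply: hg.
Qed.
Lemma irr_root_size (F : fieldType) (E : fieldExtType F) (Lq p : {poly F}) (w : E) :
  irreducible_poly Lq -> root (map_poly (in_alg E) Lq) w ->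
  (size p < size Lq)%N -> (map_poly (in_alg E) p).[w] = 0 -> p = 0.
Proof.
move=> irr rL sp pw; apply/eqP; apply: contraLR sp => pn0; rewrite -leqNgt.
set g := gcdp p Lq.
have rg : root (map_poly (in_alg E) g) w.
  by rewrite gcdp_map root_gcd rL andbT; apply/rootP.
have sg : size g != 1%N.
  apply: contraTneq rg => sg1.
  have : size (map_poly (in_alg E) g) == 1%N by rewrite size_map_poly sg1.
  by case/size_poly1P => c cn0 ->; rewrite rootC.
have eq := apply_irredp irr sg (dvdp_gcdr p Lq).
have : Lq %| p by rewrite -(eqp_dvdl _ eq) dvdp_gcdl.
exact: dvdp_leq pn0.
Qed.
Lemma mnm_le_mdeg {n : nat} (m : 'X_{1..n}) (i : 'I_n) : (m i <= mdeg m)%N.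
Proof. by rewrite mdegE (bigD1 i) //= leq_addr. Qed.

Lemma exps (q n r : nat) (m : 'X_{1..n}) : (1 < q)%N -> (1 <= r)%N ->
  (r <= q - 1)%N -> mdeg m = r ->
  [/\ forall i, (m i < q)%N, (1 <= \sum_(i < n) m i * q ^ i)%N
    & (\sum_(i < n) m i * q ^ i <= q ^ n - 1)%N].
Proof.
move=> q1 r1 rq dm; split.
- move=> i; have := mnm_le_mdeg m i; rewrite dm; lia.
- apply: (leq_trans r1); rewrite -dm mdegE; apply: leq_sum => i _.
  by rewrite leq_pmulr // expn_gt0; lia.
- case: n m dm => [|n] m dm; first by rewrite big_ord0.
  apply: (@leq_trans (r * q ^ n)).
    rewrite -dm mdegE big_distrl /=; apply: leq_sum => i _.
    by rewrite leq_mul2l leq_pexp2l ?(ltnW q1) ?orbT // -ltnS.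
  rewrite expnS; have : (0 < q ^ n)%N by rewrite expn_gt0; lia.
  nia.
Qed.

Lemma indep (F : fieldType) (E : fieldExtType F) (Lq : {poly F}) (w : E)
  (q n r : nat) (D : {mpoly F[n]}) :
  irreducible_poly Lq -> root (map_poly (in_alg E) Lq) w -> w != 0 ->
  size Lq = (q ^ n)%N -> (1 < q)%N -> (1 <= r)%N -> (r <= q - 1)%N ->
  D \is r.-homog ->
  mmap (in_alg E) (fun k : 'I_n => w ^+ (q ^ k)) D = 0 -> D = 0.
Proof.
move=> irr rL w0 sL q1 r1 rq hD eD.
pose e (m : 'X_{1..n}) := (\sum_(i < n) m i * q ^ i)%N.
have hm : forall m, m \in msupp D ->
    [/\ forall i, (m i < q)%N, (1 <= e m)%N & (e m <= q ^ n - 1)%N].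
  by move=> m mD; apply: (@exps q n r m q1 r1 rq); exact: (dhomog_mf hD mD).
have nthE : forall (m : 'X_{1..n}) (i : 'I_n), nth 0%N (multinom_val m) i = m i.
  by move=> m i; rewrite /fun_of_multinom (tnth_nth 0%N).
have einj : {in msupp D &, injective e}.
  move=> m1 m2 h1 h2 ee; apply/mnmP => i.
  have [b1 _ _] := hm _ h1; have [b2 _ _] := hm _ h2.
  rewrite -!nthE; apply: (@baseq_inj q n) (ltn_ord i).
  - by move=> j hj; have := b1 (Ordinal hj); rewrite -nthE.
  - by move=> j hj; have := b2 (Ordinal hj); rewrite -nthE.
  - by rewrite /e in ee; rewrite (eq_bigr _ (fun j _ => congr1 (muln^~ _) (nthE m1 j)))
       (eq_bigr _ (fun j _ => congr1 (muln^~ _) (nthE m2 j))).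
pose p' := \sum_(m <- msupp D) D@_m *: 'X^((e m).-1).
have sp : (size p' < size Lq)%N.
  rewrite sL /p' big_seq; apply: (big_ind (fun p : {poly F} => size p < q ^ n)%N).
  - by rewrite size_poly0 expn_gt0; lia.
  - by move=> a b ha hb; rewrite (leq_ltn_trans (size_polyD _ _)) // gtn_max ha hb.
  - move=> m mD; apply: (leq_ltn_trans (size_scale_leq _ _)).
    rewrite size_polyXn; have [_ h1 h2] := hm _ mD; lia.
have pw : (map_poly (in_alg E) p').[w] = 0.
  apply/(mulIf w0); rewrite mul0r -eD /mmap rmorph_sum /= horner_sum mulr_suml.
  apply: eq_big_seq => m mD.
  rewrite map_polyZ map_polyXn hornerZ hornerXn -mulrA -exprSr.
  have [_ h1 _] := hm _ mD; rewrite prednK //; congr (_ * _).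
  rewrite /mmap1 (eq_bigr (fun i => w ^+ (m i * q ^ i)%N)); last first.
    by move=> i _; rewrite -exprM mulnC.
  by rewrite prodrXr.
have p0 := @irr_root_size F E Lq p' w irr rL sp pw.
apply/eqP; rewrite -msupp_eq0; case eS: (msupp D) => [|m0 s] //.
have m0D : m0 \in msupp D by rewrite eS mem_head.
have : p'`_((e m0).-1) = D@_m0.
  rewrite /p' coef_sum (bigD1_seq m0) ?msupp_uniq //= coefZ coefXn eqxx mulr1.
  rewrite big_seq_cond big1 ?addr0 // => m /andP[mD ne].
  rewrite coefZ coefXn; case: eqP => [he|]; last by rewrite mulr0.
  have [_ h1 _] := hm _ mD; have [_ h2 _] := hm _ m0D.
  have : e m0 = e m by lia.
  by move/(einj _ _ m0D mD) => eqm; rewrite eqm eqxx in ne.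
rewrite p0 coef0 => h0; by move: m0D; rewrite mcoeff_msupp -h0 eqxx.
Qed.

Lemma sum_swap (K : fieldType) (V : lmodType K) (n : nat)
  (b : 'I_n -> K) (C : 'I_n -> 'I_n -> K) (x : 'I_n -> V) :
  \sum_(k < n) b k *: (\sum_(j < n) C k j *: x j) =
  \sum_(j < n) (\sum_(k < n) b k * C k j) *: x j.
Proof.
under eq_bigr do rewrite scaler_sumr.
rewrite exchange_big /=; apply: eq_bigr => j _; rewrite scaler_suml.
by apply: eq_bigr => k _; rewrite scalerA.
Qed.

Theorem theorem7p3 (F : finFieldType) (q : nat) (hq : #|F| = q)
  (n : nat) (L : {poly F}) (hL : is_qpoly q n L)
  (hirr : irreducible_poly (L %/ 'X))
  (E : fieldExtType F)
  (hsplit : splittingFieldFor 1%VS (map_poly (in_alg E) L) fullv)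
  (v : n.-tuple E)
  (hfree : free v)
  (hspan : forall x : E, root (map_poly (in_alg E) L) x <-> x \in <<v>>%VS)
  (r : nat) (hr1 : (1 <= r)%N) (hr2 : (r <= q - 1)%N) :
  {in [pred P : {mpoly F[n]} | homog_deg r P] &,
     injective (eval_at v)}.
Proof.
move=> P Q hP hQ ePQ.
have hom : forall R : {mpoly F[n]},
    R \in [pred P : {mpoly F[n]} | homog_deg r P] -> R \is r.-homog.
  by move=> R hR; rewrite dhomogE; exact: hR.
have q1 : (1 < q)%N.
  rewrite -hq; apply/card_gt1P; exists 0, 1; split => //; by rewrite eq_sym oner_neq0.
have [p pp chF] := finPcharP F.
have [k qk] : exists k, q = (p ^ k)%N.
  by exists (logn p #|F|); rewrite -hq; exact: (card_pprimeChar chF).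
have chE : p \in [char E].
  rewrite inE /= pp /= -(rmorph_nat (in_alg E)) (pcharf0 chF) rmorph0 eqxx //.
have qnat : [char E].-nat q by rewrite qk pnatX pnatE // chE.
have frob : forall x y : E, (x + y) ^+ q = x ^+ q + y ^+ q.
  by move=> x y; exact: exprDn_pchar.
have q0 : (q == 0)%N = false by apply: gtn_eqF; lia.
have frob_sum : forall (I : Type) (s : seq I) (f : I -> E),
    (\sum_(i <- s) f i) ^+ q = \sum_(i <- s) f i ^+ q.
  move=> I s f; apply: (big_morph (fun x : E => x ^+ q) frob).
  by rewrite expr0n q0.
have fixF : forall a : F, (in_alg E a) ^+ q = in_alg E a.
  by move=> a; rewrite -rmorphXn /= -hq expf_card.
case: hL => a [an L_eq].
have mapL : forall x : E, (map_poly (in_alg E) L).[x] =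
    \sum_(i < n.+1) in_alg E (a i) * x ^+ (q ^ i).
  move=> x; rewrite L_eq rmorph_sum horner_sum; apply: eq_bigr => i _.
  by rewrite /= map_polyZ map_polyXn hornerZ hornerXn.
have rootq : forall x : E, root (map_poly (in_alg E) L) x ->
    root (map_poly (in_alg E) L) (x ^+ q).
  move=> x /rootP rx; apply/rootP.
  have : (map_poly (in_alg E) L).[x] ^+ q = 0 by rewrite rx expr0n q0.
  rewrite mapL frob_sum => h; apply: etrans h; rewrite mapL.
  by apply: eq_bigr => i _; rewrite exprMn fixF -!exprM mulnC.
pose Lq := \sum_(i < n.+1) a i *: ('X^((q ^ i).-1) : {poly F}).
have LLq : L = Lq * 'X.
  rewrite L_eq /Lq mulr_suml; apply: eq_bigr => i _.
  by rewrite -scalerAl -exprSr prednK // expn_gt0; lia.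
have Ldiv : L %/ 'X = Lq by rewrite LLq mulpK // polyX_eq0.
rewrite Ldiv in hirr.
have sLq : size Lq = (q ^ n)%N.
  have stop : size (a ord_max *: ('X^((q ^ n).-1) : {poly F})) = (q ^ n)%N.
    by rewrite size_scale // size_polyXn prednK // expn_gt0; lia.
  rewrite /Lq big_ord_recr /= addrC size_addl stop //.
  apply: (big_ind (fun p : {poly F} => size p < q ^ n)%N).
  - by rewrite size_poly0 expn_gt0; lia.
  - by move=> a1 b1 ha hb; rewrite (leq_ltn_trans (size_polyD _ _)) // gtn_max ha hb.
  - move=> i _; apply: (leq_ltn_trans (size_scale_leq _ _)).
    rewrite size_polyXn prednK ?expn_gt0 /=; last lia.
    by rewrite ltn_exp2l.
have n0 : (0 < n)%N.
  case: hirr => sz _; move: sz; rewrite sLq.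
  by case: (n) => [|n']; rewrite ?expn0.
pose i0 := Ordinal n0.
pose w := tnth v i0.
have w0 : w != 0 by apply: (free_not0 hfree); apply: mem_tnth.
have rLw : root (map_poly (in_alg E) L) w.
  by apply/hspan; apply: memv_span; apply: mem_tnth.
have rLqw : root (map_poly (in_alg E) Lq) w.
  by move: rLw; rewrite LLq rmorphM /= map_polyX rootM rootX (negbTE w0) orbF.
have rootz : forall i : nat, root (map_poly (in_alg E) L) (w ^+ (q ^ i)).
  elim=> [|i IH]; first by rewrite expn0 expr1.
  by rewrite expnSr exprM; apply: rootq.
pose zt := [tuple w ^+ (q ^ i) | i < n].
have ztE : forall i, tnth zt i = w ^+ (q ^ i) by move=> i; rewrite tnth_mktuple.
have indep' := fun r' D hr1 hr2 hD =>
  @indep F E Lq w q n r' D hirr rLqw w0 sLq q1 hr1 hr2 hD.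
have zfree : free zt.
  apply/freeP => c hc i.
  pose D := \sum_(j < n) c j *: ('X_j : {mpoly F[n]}).
  have hD : D \is 1.-homog.
    by apply: rpred_sum => j _; apply: rpredZ; rewrite dhomogX; apply/eqP; exact: mdeg1.
  have eD : mmap (in_alg E) (fun k : 'I_n => w ^+ (q ^ k)) D = 0.
    have hc' : \sum_(j < n) c j *: tnth zt j = 0.
      by apply: etrans hc; apply: eq_bigr => j _; rewrite (tnth_nth 0).
    rewrite -hc' raddf_sum; apply: eq_bigr => j _.
    by rewrite /= mmapZ mmapX mmap1U ztE -mulr_algl.
  have D0 : D = 0 by apply: (indep' 1%N D (leqnn 1)) => //; lia.
  have := congr1 (mcoeff U_(i)) D0; rewrite mcoeff0 /D raddf_sum (bigD1 i) //=.
  rewrite mcoeffZ mcoeffXU eqxx mulr1 big1 ?addr0 // => j /negbTE nji.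
  by rewrite mcoeffZ mcoeffXU nji mulr0.
have spanEq : <<zt>>%VS = <<v>>%VS.
  apply/eqP; rewrite eqEdim; apply/andP; split.
    apply/span_subvP => x /tnthP [i ->]; rewrite ztE; apply/hspan; exact: rootz.
  by move: zfree hfree; rewrite /free => /eqP -> /eqP ->; rewrite !size_tuple.
pose B i k := coord zt k (tnth v i).
pose C k j := coord v j (tnth zt k).
have vB : forall i, tnth v i = \sum_k B i k *: tnth zt k.
  move=> i; have : tnth v i \in <<zt>>%VS by rewrite spanEq memv_span // mem_tnth.
  move/coord_span => {1}->; apply: eq_bigr => k' _; by rewrite [tnth zt k'](tnth_nth 0).
have zC : forall k, tnth zt k = \sum_j C k j *: tnth v j.
  move=> k'; have : tnth zt k' \in <<v>>%VS by apply/hspan; rewrite ztE; apply: rootz.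
  move/coord_span => {1}->; apply: eq_bigr => j _; by rewrite [tnth v j](tnth_nth 0).
have BC : forall i j, \sum_k B i k * C k j = (i == j)%:R.
  move=> i j; have := vB i.
  under eq_bigr do rewrite zC.
  rewrite sum_swap => /(congr1 (coord v j)).
  rewrite (tnth_nth 0) coord_free //.
  rewrite (eq_bigr (fun j' => (\sum_k B i k * C k j') *: v`_j')); last first.
    by move=> j' _; rewrite (tnth_nth 0).
  by rewrite coord_sum_free // => ->.
pose lB := [tuple \sum_(k < n) B i k *: ('X_k : {mpoly F[n]}) | i < n].
pose lC := [tuple \sum_(j < n) C k j *: ('X_j : {mpoly F[n]}) | k < n].
have hD : P - Q \is r.-homog by rewrite rpredB // hom.
have eD : eval_at v (P - Q) = 0.
  by rewrite /eval_at mmapB; apply/eqP; rewrite subr_eq0; apply/eqP; exact: ePQ.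
suff : P - Q = 0 by move/eqP; rewrite subr_eq0 => /eqP.
move: hD eD; set D := P - Q => hD eD.
pose D' := D \mPo lB.
have eD' : mmap (in_alg E) (fun k : 'I_n => w ^+ (q ^ k)) D' = 0.
  rewrite -eD /eval_at (@mmap_ext _ _ _ _ (fun k => w ^+ (q ^ k)) (tnth zt));
    last by move=> k'; rewrite ztE.
  rewrite /D' mmap_comp; apply: mmap_ext => i; rewrite tnth_mktuple raddf_sum /= vB.
  by apply: eq_bigr => k' _; rewrite /= mmapZ mmapX mmap1U -mulr_algl.
have hD' : D' \is r.-homog.
  rewrite /D' comp_mpolyEX big_seq; apply: rpred_sum => m mD; apply: rpredZ.
  have dm : mdeg m = r by exact: (dhomog_mf hD mD).
  rewrite comp_mpolyX -dm mdegE.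
  apply: (big_ind2 (fun (p : {mpoly F[n]}) (d : nat) => p \is d.-homog)).
  - exact: dhomog1.
  - by move=> p1 d1 p2 d2 h1 h2; exact: dhomogM.
  - move=> i _; rewrite -{2}[m i]mul1n; apply: dhomogMn; rewrite tnth_mktuple.
    by apply: rpred_sum => k' _; apply: rpredZ; rewrite dhomogX; apply/eqP; exact: mdeg1.
have D'0 := indep' r D' hr1 hr2 hD' eD'.
have idX : forall i, tnth lB i \mPo lC = 'X_i.
  move=> i; rewrite tnth_mktuple raddf_sum /=.
  under eq_bigr do rewrite comp_mpolyZ comp_mpolyXU -tnth_nth tnth_mktuple.
  rewrite sum_swap (bigD1 i) //= BC eqxx scale1r big1 ?addr0 // => j /negbTE nij.
  by rewrite BC eq_sym nij scale0r.
have h : D' \mPo lC = D \mPo [tuple 'X_i | i < n].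
  rewrite {1}/comp_mpoly mmap_comp /comp_mpoly; apply: mmap_ext => i.
  by rewrite tnth_mktuple -idX.
by rewrite -[D]comp_mpoly_id -h D'0 comp_mpoly0.
Qed.
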